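(* Let $(\mathcal{P},\cdot)$ be an admissible Poisson algebra and let $e_1,e_2$ be non-zero idempotents with $e_1\cdot e_2=e_2\cdot e_1=0$. For $k=1,2$ and $i\in\{0,1\}$ put $\mathcal{P}^k_{i,i}=\{x\in\mathcal{P}: e_k\cdot x=x\cdot e_k=ix\}$. Then $\mathcal{P}$ is the direct sum of subalgebras $$\mathcal{P}=\big(\mathcal{P}^1_{0,0}\cap\mathcal{P}^2_{0,0}\big)\oplus\mathcal{P}^1_{1,1}\oplus\mathcal{P}^2_{1,1}.$$
   Context: $\mathbb{K}$ is a field of characteristic different from $2$ and $3$. Associator: $A(X,Y,Z)=(X\cdot Y)\cdot Z-X\cdot(Y\cdot Z)$. An admissible Poisson algebra is a $\mathbb{K}$-vector space $\mathcal{P}$ with a bilinear product $\cdot$ satisfying $3A(X,Y,Z)=(X\cdot Z)\cdot Y+(Y\cdot Z)\cdot X-(Y\cdot X)\cdot Z-(Z\cdot X)\cdot Y$ for all $X,Y,Z$. An idempotent is $e$ with $e\cdot e=e$. *)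

(* Defs.v *)
From HB Require Import structures.
From mathcomp Require Import all_boot all_order all_algebra.
Set Implicit Arguments. Unset Strict Implicit. Unset Printing Implicit Defensive.
Import GRing.Theory.
Local Open Scope ring_scope.

Definition bilinear_prod (K : fieldType) (V : lmodType K) (mul : V -> V -> V) : Prop :=
  (forall (a : K) (x y z : V), mul (a *: x + y) z = a *: mul x z + mul y z) /\
  (forall (a : K) (x y z : V), mul z (a *: x + y) = a *: mul z x + mul z y).

Definition associator (K : fieldType) (V : lmodType K) (mul : V -> V -> V) (x y z : V) : V :=
  mul (mul x y) z - mul x (mul y z).

Definition admissible_poisson (K : fieldType) (V : lmodType K) (mul : V -> V -> V) : Prop :=
  bilinear_prod mul /\
  forall x y z : V,
    (3%:R : K) *: associator mul x y z =
      mul (mul x z) y + mul (mul y z) x - mul (mul y x) z - mul (mul z x) y.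

Definition is_idempotent (K : fieldType) (V : lmodType K) (mul : V -> V -> V) (e : V) : Prop :=
  mul e e = e.

Definition peirce_space (K : fieldType) (V : lmodType K) (mul : V -> V -> V)
  (e : V) (i : K) : V -> Prop :=
  fun x => mul e x = i *: x /\ mul x e = i *: x.

Definition subalgebra (K : fieldType) (V : lmodType K) (mul : V -> V -> V) (S : V -> Prop) : Prop :=
  S 0 /\ (forall (a : K) (x y : V), S x -> S y -> S (a *: x + y)) /\
  (forall x y : V, S x -> S y -> S (mul x y)).

Definition direct_sum3 (K : fieldType) (V : lmodType K) (A B C : V -> Prop) : Prop :=
  forall v : V,
    (exists a b c, [/\ A a, B b, C c & v = a + b + c]) /\
    (forall a b c a' b' c', A a -> B b -> C c -> A a' -> B b' -> C c' ->
        v = a + b + c -> v = a' + b' + c' -> [/\ a = a', b = b' & c = c']).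

(* Main.v *)
Require Import Defs.
Set Warnings "-notation-overridden,-ambiguous-paths".
From HB Require Import structures.
From mathcomp Require Import all_boot all_order all_algebra.
Import GRing.Theory.
Local Open Scope ring_scope.


Inductive tm := TA of nat | TZ | TP of tm & tm | TN of tm | TM of tm & nat | TI of tm & int.

Fixpoint ev (V : zmodType) (env : seq V) (t : tm) : V :=
  match t with
  | TA i => nth 0 env i
  | TZ => 0
  | TP a b => ev V env a + ev V env b
  | TN a => - ev V env a
  | TM a n => ev V env a *+ n
  | TI a k => ev V env a *~ k
  end.

Fixpoint addl (s1 s2 : seq int) : seq int :=
  match s1, s2 with
  | [::], _ => s2
  | _, [::] => s1
  | a :: s1', b :: s2' => (a + b) :: addl s1' s2'
  end.

Fixpoint co (t : tm) : seq int :=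
  match t with
  | TA i => rcons (nseq i 0) 1
  | TZ => [::]
  | TP a b => addl (co a) (co b)
  | TN a => map (fun z => - z) (co a)
  | TM a n => map (fun z => z * n%:Z) (co a)
  | TI a k => map (fun z => z * k) (co a)
  end.

Fixpoint lc (V : zmodType) (env : seq V) (s : seq int) : V :=
  match s with
  | [::] => 0
  | c :: s' => (nth 0 env 0) *~ c + lc V (behead env) s'
  end.
Arguments ev {V} env t.
Arguments lc {V} env s.

Lemma lc_add (V : zmodType) (s1 s2 : seq int) (env : seq V) :
  lc env (addl s1 s2) = lc env s1 + lc env s2.
Proof.
elim: s1 s2 env => [|a s1 IH] [|b s2] env /=; rewrite ?add0r ?addr0 //.
by rewrite IH mulrzDr addrACA.
Qed.

Lemma lc_opp (V : zmodType) (s : seq int) (env : seq V) :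
  lc env (map (fun z => - z) s) = - lc env s.
Proof. elim: s env => [|a s IH] env /=; rewrite ?oppr0 // IH mulrNz opprD //. Qed.

Lemma lc_nat (V : zmodType) (n : nat) (s : seq int) (env : seq V) :
  lc env (map (fun z => z * n%:Z) s) = lc env s *+ n.
Proof.
elim: s env => [|a s IH] env /=; rewrite ?mul0rn // IH mulrzA mulrnDl.
by rewrite -pmulrn.
Qed.

Lemma lc_int (V : zmodType) (k : int) (s : seq int) (env : seq V) :
  lc env (map (fun z => z * k) s) = lc env s *~ k.
Proof.
elim: s env => [|a s IH] env /=; rewrite ?mul0rz // IH mulrzA mulrzDl //.
Qed.

Lemma lc_atom (V : zmodType) (i : nat) (env : seq V) :
  lc env (rcons (nseq i 0) 1) = nth 0 env i.
Proof.
elim: i env => [|i IH] env /=; first by rewrite mulr1z addr0.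
by rewrite mulr0z add0r IH; case: env => [|? ?] //=; rewrite nth_nil.
Qed.

Lemma ev_lc (V : zmodType) (env : seq V) t : ev env t = lc env (co t).
Proof.
elim: t => [i||a IHa b IHb|a IHa|a IHa n|a IHa k] /=; last by rewrite lc_int IHa.
- by rewrite lc_atom.
- by [].
- by rewrite lc_add IHa IHb.
- by rewrite lc_opp IHa.
- by rewrite lc_nat IHa.
Qed.

Lemma lc_zero (V : zmodType) (env : seq V) s : all (eq_op 0) s -> lc env s = 0.
Proof.
elim: s env => [|a s IH] env //= /andP[/eqP <- /IH ->]; by rewrite mulr0z addr0.
Qed.

Lemma tm_eq (V : zmodType) (env : seq V) t1 t2 :
  all (eq_op 0) (co (TP t1 (TN t2))) -> ev env t1 = ev env t2.
Proof.
move=> H; apply/eqP; rewrite -subr_eq0; apply/eqP.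
by have := @lc_zero V env _ H; rewrite -ev_lc /=.
Qed.

Ltac find_idx a l :=
  lazymatch l with
  | (?b :: ?l') => match constr:(tt) with
                   | _ => let _ := constr:(erefl a : a = b) in constr:(0%N)
                   | _ => let n := find_idx a l' in constr:(S n) end
  end.

Ltac atoms l t :=
  lazymatch t with
  | @GRing.add _ ?a ?b => let l1 := atoms l a in atoms l1 b
  | @GRing.opp _ ?a => atoms l a
  | @GRing.zero _ => l
  | @GRing.natmul _ ?a _ => atoms l a
  | @intmul _ ?a _ => atoms l a
  | _ => match constr:(tt) with
         | _ => let _ := find_idx t l in l
         | _ => constr:(t :: l)
         end
  end.

Ltac reify l t :=
  lazymatch t with
  | @GRing.add _ ?a ?b => let ra := reify l a in let rb := reify l b in constr:(TP ra rb)
  | @GRing.opp _ ?a => let ra := reify l a in constr:(TN ra)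
  | @GRing.zero _ => constr:(TZ)
  | @GRing.natmul _ ?a ?n => let ra := reify l a in constr:(TM ra n)
  | @intmul _ ?a ?k => let ra := reify l a in constr:(TI ra k)
  | _ => let i := find_idx t l in constr:(TA i)
  end.

Ltac zmod_eq :=
  lazymatch goal with
  | |- @eq ?T ?l ?r =>
    let l0 := constr:(@nil T) in
    let l1 := atoms l0 l in
    let l2 := atoms l1 r in
    let tl := reify l2 l in
    let tr := reify l2 r in
    apply: (@tm_eq _ l2 tl tr); vm_compute; reflexivity
  end.

Lemma addh_lem (V : zmodType) (X l r : V) (k : int) :
  l = r -> X - (l - r) *~ k = 0 -> X = 0.
Proof. by move=> ->; rewrite subrr mul0rz subr0. Qed.

Ltac addh H k := apply: (@addh_lem _ _ _ _ k H).


Theorem mainTheorem7 (K : fieldType) (V : lmodType K) (mul : V -> V -> V)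
  (e1 e2 : V) :
  2 \notin [pchar K] -> 3 \notin [pchar K] ->
  admissible_poisson mul ->
  is_idempotent mul e1 -> is_idempotent mul e2 -> e1 != 0 -> e2 != 0 ->
  mul e1 e2 = 0 -> mul e2 e1 = 0 ->
  let P00 := fun x => peirce_space mul e1 0 x /\ peirce_space mul e2 0 x in
  let P1 := peirce_space mul e1 1 in
  let P2 := peirce_space mul e2 1 in
  [/\ subalgebra mul P00, subalgebra mul P1, subalgebra mul P2
    & direct_sum3 P00 P1 P2].
Proof.
move=> c2 c3 [[linl linr] id3] i1 i2 _ _ o12 o21.
have h2 : (2%:R : K) != 0.
  by apply: contra c2 => h; rewrite inE /= h.
have h3 : (3%:R : K) != 0.
  by apply: contra c3 => h; rewrite inE /= h.
have c3' (v : V) : v *+ 3 = 0 -> v = 0.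
  by rewrite -scaler_nat => /eqP; rewrite scaler_eq0 (negPf h3) /= => /eqP.
have c4' (v : V) : v *+ 4 = 0 -> v = 0.
  rewrite -scaler_nat -[4%N]/(2 * 2)%N natrM => /eqP.
  by rewrite scaler_eq0 mulf_eq0 (negPf h2) /= => /eqP.
have mlD x y z : mul (x + y) z = mul x z + mul y z.
  by have := linl 1 x y z; rewrite !scale1r.
have mrD x y z : mul z (x + y) = mul z x + mul z y.
  by have := linr 1 x y z; rewrite !scale1r.
have ml0 z : mul 0 z = 0.
  by have h := mlD 0 0 z; rewrite addr0 in h; apply: (addrI (mul 0 z)); rewrite -h addr0.
have mr0 z : mul z 0 = 0.
  by have h := mrD 0 0 z; rewrite addr0 in h; apply: (addrI (mul z 0)); rewrite -h addr0.
have mlZ a x z : mul (a *: x) z = a *: mul x z.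
  by rewrite -(addr0 (a *: x)) linl ml0 addr0.
have mrZ a x z : mul z (a *: x) = a *: mul z x.
  by rewrite -(addr0 (a *: x)) linr mr0 addr0.
have mlN x z : mul (- x) z = - mul x z.
  by rewrite -scaleN1r mlZ scaleN1r.
have mrN x z : mul z (- x) = - mul z x.
  by rewrite -scaleN1r mrZ scaleN1r.
have I x y z : mul (mul x y) z *+ 3 - mul x (mul y z) *+ 3 =
    mul (mul x z) y + mul (mul y z) x - mul (mul y x) z - mul (mul z x) y.
  by rewrite -id3 /associator scaler_nat mulrnBl.
have idem e : mul e e = e ->
    (forall x, mul x e = mul e x) /\ (forall x, mul e (mul e x) = mul e x).
  move=> ee.
  have C x : mul (mul e x) e = mul e (mul x e).
    apply/eqP; rewrite -subr_eq0; apply/eqP; apply: c3'.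
    have := I e x e; rewrite ee => h.
    addh h (1:int); zmod_eq.
  have S x : mul e (mul e x) = mul (mul x e) e.
    apply/eqP; rewrite -subr_eq0; apply/eqP; apply: c3'.
    have h1q := I e e (mul x e); have h3q := I (mul x e) e e;
    have h3p := I (mul e x) e e.
    rewrite ee in h1q h3q h3p.
    rewrite -!C in h1q h3q h3p.
    addh h1q (-2:int); addh h3q (1:int); addh h3p (-3:int).
    zmod_eq.
  have LR x : mul x e = mul e x.
    apply/eqP; rewrite -subr_eq0; apply/eqP; apply: c3'.
    have h1 := I e e x; have g3 := I x e e; have h := S x.
    rewrite ee in h1 g3.
    addh h1 (-1:int); addh g3 (-1:int); addh h (-3:int).
    zmod_eq.
  split=> // x.
  apply/eqP; rewrite -subr_eq0; apply/eqP; apply: c4'.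
  have h1 := I e e x; rewrite ee in h1; rewrite ?LR in h1.
  addh h1 (-1:int). zmod_eq.
have cross a b : mul a a = a -> mul b b = b -> mul a b = 0 -> mul b a = 0 ->
    forall x, mul a (mul b x) = 0.
  move=> aa bb ab ba x.
  have [LRa _] := idem a aa; have [LRb _] := idem b bb.
  apply: c4'; have h := I a b x; rewrite ab ba ml0 in h.
  rewrite ?LRa ?LRb in h.
  addh h (-1:int); zmod_eq.
have mul00 e : mul e e = e -> forall x y, mul e x = 0 -> mul e y = 0 ->
    mul e (mul x y) = 0.
  move=> ee x y ex ey; have [LR _] := idem e ee.
  apply: c4'; have h := I e x y; rewrite ?LR ex ey ml0 in h.
  addh h (-1:int); zmod_eq.
have mul11 e : mul e e = e -> forall x y, mul e x = x -> mul e y = y ->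
    mul e (mul x y) = mul x y.
  move=> ee x y ex ey; have [LR _] := idem e ee.
  apply/eqP; rewrite -subr_eq0; apply/eqP.
  apply: c4'; have h := I e x y; rewrite ?LR ex ey in h.
  addh h (-1:int); zmod_eq.
have [LR1 LL1] := idem e1 i1; have [LR2 LL2] := idem e2 i2.
have X12 := cross e1 e2 i1 i2 o12 o21.
have X21 := cross e2 e1 i2 i1 o21 o12.
have PS e i x : mul e e = e -> (peirce_space mul e i x <-> mul e x = i *: x).
  move=> ee; have [LR _] := idem e ee; rewrite /peirce_space LR.
  by split=> [[]|].
have sub0 e : mul e e = e -> subalgebra mul (peirce_space mul e 0).
  move=> ee; split; first by apply/(PS e 0 0 ee); rewrite scale0r mr0.
  split.
    move=> a x y /(PS e 0 x ee) hx /(PS e 0 y ee) hy; apply/(PS _ _ _ ee).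
    by rewrite linr hx hy !scale0r scaler0 addr0.
  move=> x y /(PS e 0 x ee) hx /(PS e 0 y ee) hy; apply/(PS _ _ _ ee).
  by rewrite scale0r mul00 // ?hx ?hy scale0r.
have sub1 e : mul e e = e -> subalgebra mul (peirce_space mul e 1).
  move=> ee; split; first by apply/(PS e 1 0 ee); rewrite scaler0 mr0.
  split.
    move=> a x y /(PS e 1 x ee) hx /(PS e 1 y ee) hy; apply/(PS _ _ _ ee).
    by rewrite linr hx hy !scale1r.
  move=> x y /(PS e 1 x ee) hx /(PS e 1 y ee) hy; apply/(PS _ _ _ ee).
  by rewrite scale1r mul11 // ?hx ?hy scale1r.
move=> P00 P1 P2.
have [z1 [l1 m1]] := sub0 e1 i1; have [z2 [l2 m2]] := sub0 e2 i2.
split; [|exact: sub1 e1 i1|exact: sub1 e2 i2|].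
  split; first by split.
  split; first by move=> a x y [? ?] [? ?]; split; [apply: l1|apply: l2].
  by move=> x y [? ?] [? ?]; split; [apply: m1|apply: m2].
have hP00 x : P00 x -> mul e1 x = 0 /\ mul e2 x = 0.
  by move=> [/(PS _ _ _ i1) q1 /(PS _ _ _ i2) q2]; rewrite q1 q2 !scale0r.
have hP1 x : P1 x -> mul e1 x = x by move/(PS _ _ _ i1); rewrite scale1r.
have hP2 x : P2 x -> mul e2 x = x by move/(PS _ _ _ i2); rewrite scale1r.
have proj a b c : P00 a -> P1 b -> P2 c ->
    mul e1 (a + b + c) = b /\ mul e2 (a + b + c) = c.
  move=> /hP00 [a1 a2] /hP1 hb /hP2 hc.
  have c1 : mul e1 c = 0 by rewrite -hc X12.
  have b2 : mul e2 b = 0 by rewrite -hb X21.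
  rewrite !mrD a1 a2 c1 b2 hb hc.
  by split; zmod_eq.
move=> v; split.
  exists (v - mul e1 v - mul e2 v), (mul e1 v), (mul e2 v); split.
  - split; apply/(PS _ _ _ _); rewrite ?scale0r ?i1 ?i2 //.
    + by rewrite !mrD !mrN LL1 X12; zmod_eq.
    + by rewrite !mrD !mrN LL2 X21; zmod_eq.
  - by apply/(PS _ _ _ i1); rewrite LL1 scale1r.
  - by apply/(PS _ _ _ i2); rewrite LL2 scale1r.
  - zmod_eq.
move=> a b c a' b' c' ha hb hc ha' hb' hc' ev ev'.
have [p1 p2] := proj a b c ha hb hc; have [p1' p2'] := proj a' b' c' ha' hb' hc'.
have eb : b = b' by rewrite -p1 -p1' -ev -ev'.
have ec : c = c' by rewrite -p2 -p2' -ev -ev'.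
split=> //; apply/eqP; rewrite -subr_eq0; apply/eqP.
rewrite -eb -ec in ev'.
addh ev (-1:int); addh ev' (1:int); zmod_eq.
Qed.
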